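(* Let $A\subsetneq\mathbb{R}^n$ be an affine subspace defined by linear equations with integer coefficients, and let $A_{\ge}$ be a closed half-space in $A$ defined by a non-strict linear inequality with integer coefficients. Then $A_{\ge}$ is a tropical prevariety in $\mathbb{R}^n$.
   Context: A tropical polynomial $f$ in $n$ variables is a function $f(x)=\min\{L_1(x),\dots,L_m(x)\}$ on $\mathbb{R}^n$, where each $L_j(x)=\sum_{i=1}^n a_{ji}x_i+b_j$ has non-negative integer coefficients $a_{ji}$ and real constant term $b_j$. The tropical hypersurface $V(f)$ is the set of points where this piecewise-linear function is not smooth. A tropical prevariety is a set of the form $V(f_1)\cap\cdots\cap V(f_k)$ for finitely many tropical polynomials $f_1,\dots,f_k$. *)

(* Defs.v *)
From HB Require Import structures.
From mathcomp Require Import all_boot all_order all_algebra.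
From mathcomp Require Import all_classical all_reals all_analysis.
Set Implicit Arguments. Unset Strict Implicit. Unset Printing Implicit Defensive.
Import Order.TTheory GRing.Theory Num.Theory.
Import numFieldNormedType.Exports.
Local Open Scope classical_set_scope.
Local Open Scope ring_scope.

Definition trop_term (R : realType) (n : nat) := ({ffun 'I_n -> nat} * R)%type.

Definition trop_lin (R : realType) (n : nat) (t : trop_term R n) (x : 'rV[R]_n) : R :=
  \sum_(i < n) (t.1 i)%:R * x ord0 i + t.2.

(* A tropical polynomial is given by a NONEMPTY list of terms L_1,...,L_m;
   its value is min { L_1(x), ..., L_m(x) }. *)
Definition trop_poly (R : realType) (n : nat) := seq (trop_term R n).

Definition trop_eval (R : realType) (n : nat) (f : trop_poly R n) (x : 'rV[R]_n) : R :=
  match f with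
  | [::] => 0
  | t :: f' => foldr (fun s acc => Order.min (trop_lin s x) acc) (trop_lin t x) f'
  end.

Definition trop_hypersurface (R : realType) (n : nat) (f : trop_poly R n) : set 'rV[R]_n :=
  [set x | ~ differentiable (trop_eval f) x].

Definition trop_prevariety (R : realType) (n : nat) (S : set 'rV[R]_n) : Prop :=
  exists fs : seq (trop_poly R n),
    (forall f, f \in fs -> f != [::]) /\
    S = [set x | forall f, f \in fs -> trop_hypersurface f x].

Definition int_lin (R : realType) (n : nat) (a : 'I_n -> int) (x : 'rV[R]_n) : R :=
  \sum_(j < n) (a j)%:~R * x ord0 j.

(* Main.v *)
Require Import Defs.
From HB Require Import structures.
From mathcomp Require Import all_boot all_order all_algebra.
From mathcomp Require Import all_classical all_reals all_analysis.
Set Implicit Arguments. Unset Strict Implicit. Unset Printing Implicit Defensive.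
Import Order.TTheory GRing.Theory Num.Theory.
Import numFieldNormedType.Exports.
Local Open Scope classical_set_scope.
Local Open Scope ring_scope.
From mathcomp Require Import lra.

Lemma near_eq_diff (R : realType) (V W : normedModType R) (f g : V -> W) (x : V) :
  differentiable f x -> (\forall y \near x, f y = g y) -> differentiable g x.
Proof.
move=> df fg.
have gx : f x = g x by apply: (nbhs_singleton fg).
apply/diffP.
apply: (@getPex _ (fun (df : {linear V -> W}) => continuous df /\
  forall y, g y = g (lim (nbhs x)) + df (y - lim (nbhs x))
                  +o_(y \near x) (y - lim (nbhs x)))).
exists ('d f x); split; first exact: diff_continuous.
have /diffP [_ hf] := df.
rewrite lim_id in hf *.
have hf' := eqadd_some_oP (funext hf).
have hg : g = (fun y => g x + 'd f x (y - x)) +o_ (nbhs x) (fun y => y - x).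
  apply/eqaddoP => e e0.
  have := hf' e e0.
  apply: filterS2 fg => y fgy /=.
  by rewrite !fctE fgy gx.
rewrite funeqE in hg.
exact: hg.
exact: norm_hausdorff.
Qed.

Section T.
Variables (R : realType) (n : nat).
Implicit Types (f : trop_poly R n) (s : trop_term R n) (x v : 'rV[R]_n).

Definition tlinp s v : R := \sum_(i < n) (s.1 i)%:R * v ord0 i.

Lemma tlin_shift s (h : R) v x :
  trop_lin s (h *: v + x) - trop_lin s x = h * tlinp s v.
Proof.
rewrite /trop_lin /tlinp opprD addrACA subrr addr0 -sumrB mulr_sumr; apply: eq_bigr => i _.
by rewrite !mxE mulrDr addrK mulrCA.
Qed.

Lemma tlinpN s v : tlinp s (- v) = - tlinp s v.
Proof. by rewrite /tlinp -sumrN; apply: eq_bigr => i _; rewrite mxE mulrN. Qed.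

Lemma foldr_min_le (b : R) (l : seq (trop_term R n)) x :
  let m := foldr (fun s acc => Order.min (trop_lin s x) acc) b l in
  m <= b /\ (forall s, s \in l -> m <= trop_lin s x) /\
  (m = b \/ exists2 s, s \in l & m = trop_lin s x).
Proof.
elim: l => [|t l [IH1 [IH2 IH3]]] /=; first by split=> //; split=> //; left.
set m := foldr _ _ _ in IH1 IH2 IH3 *.
split; first by rewrite ge_min IH1 orbT.
split.
  move=> s; rewrite inE => /orP [/eqP ->|sl]; first by rewrite ge_min lexx.
  by rewrite ge_min IH2 ?orbT.
rewrite /Order.min; case: ifP => _; first by right; exists t; rewrite ?mem_head.
case: IH3 => [->|[s sl ->]]; first by left.
by right; exists s; rewrite // inE sl orbT.
Qed.

Lemma teval_le f s x : s \in f -> trop_eval f x <= trop_lin s x.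
Proof.
case: f => [//|t l]; rewrite inE /= => /orP [/eqP ->|sl].
  by have [] := foldr_min_le (trop_lin t x) l x.
by have [_ [H _]] := foldr_min_le (trop_lin t x) l x; apply: H.
Qed.

Lemma teval_att f x : f != [::] -> exists2 s, s \in f & trop_eval f x = trop_lin s x.
Proof.
case: f => [//|t l] _ /=.
have [_ [_ [->|[s sl ->]]]] := foldr_min_le (trop_lin t x) l x.
  by exists t; rewrite ?mem_head.
by exists s; rewrite // inE sl orbT.
Qed.

Lemma right_of_dnbhs (g : R -> R) (l : R) : g @ 0^' --> l -> g @ 0^'+ --> l.
Proof.
move=> cvfx A /cvfx /nbhs_ballP [_ /posnumP[e] xe_A].
by exists e%:num => //= y xe_y /gt_eqF/negbT/xe_A; exact.
Qed.

Lemma d_le f s x : differentiable (trop_eval f) x -> s \in f ->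
  trop_eval f x = trop_lin s x -> forall v, 'd (trop_eval f) x v <= tlinp s v.
Proof.
move=> df sf ex v; rewrite -deriveE //.
have cv := @diff_derivable _ _ _ _ _ v df.
rewrite /derive; apply: (cvgr_to_le (right_of_dnbhs cv)).
near=> h.
have h0 : 0 < h by near: h; exact: nbhs_right_gt.
rewrite /= ler_pdivrMl //.
by rewrite -(tlin_shift s h v x) ex lerD2r teval_le.
Unshelve. all: by end_near. Qed.


Lemma d_eq f s x : differentiable (trop_eval f) x -> s \in f ->
  trop_eval f x = trop_lin s x -> forall v, 'd (trop_eval f) x v = tlinp s v.
Proof.
move=> df sf ex v; apply/eqP; rewrite eq_le d_le //=.
have := d_le df sf ex (- v); rewrite linearN tlinpN.
by rewrite lerN2.
Qed.

Lemma tlinp_delta s j : tlinp s (\row_(i < n) (i == j)%:R) = (s.1 j)%:R.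
Proof.
rewrite /tlinp (bigD1 j) //= big1 => [|i /negbTE ij]; first by rewrite mxE eqxx mulr1 addr0.
by rewrite mxE ij mulr0.
Qed.

Lemma not_diff f s1 s2 x : s1 \in f -> s2 \in f -> s1.1 != s2.1 ->
  trop_eval f x = trop_lin s1 x -> trop_eval f x = trop_lin s2 x ->
  ~ differentiable (trop_eval f) x.
Proof.
move=> s1f s2f ne e1 e2 df; move/negP: ne; apply; apply/eqP/ffunP => j.
have := d_eq df s1f e1 (\row_(i < n) (i == j)%:R).
rewrite (d_eq df s2f e2) !tlinp_delta => /eqP; rewrite eqr_nat => /eqP.
by [].
Qed.


Lemma tlin_diff s x : differentiable (trop_lin s) x.
Proof.
have -> : trop_lin s = (\sum_(i < n) (cst ((s.1 i)%:R : R) * (fun y : 'rV[R]_n => y ord0 i)))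
   + cst s.2.
  by apply/funext => y; rewrite /trop_lin !fctE fct_sumE.
apply: differentiableD; last exact: differentiable_cst.
apply: differentiable_sum => i; apply: differentiableM; first exact: differentiable_cst.
exact: differentiable_coord.
Qed.

Lemma near_all (P : trop_term R n -> 'rV[R]_n -> Prop) (l : seq (trop_term R n)) x :
  (forall s, s \in l -> \forall y \near x, P s y) ->
  \forall y \near x, forall s, s \in l -> P s y.
Proof.
elim: l => [|t l IH] H; first by near=> y => s.
have Ht := H t (mem_head _ _).
have Hl : \forall y \near x, forall s, s \in l -> P s y.
  by apply: IH => s sl; apply: H; rewrite inE sl orbT.
apply: filterS2 Ht Hl => y Pt Pl s; rewrite inE => /orP [/eqP ->|]; by [|apply: Pl].
Unshelve. all: by end_near. Qed.

Lemma diff_uniq f s x : s \in f ->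
  (forall s', s' \in f -> s' = s \/ trop_lin s x < trop_lin s' x) ->
  differentiable (trop_eval f) x.
Proof.
move=> sf H.
apply: (@near_eq_diff _ _ _ (trop_lin s)); first exact: tlin_diff.
have : \forall y \near x, forall s', s' \in f -> s' = s \/ trop_lin s y < trop_lin s' y.
  apply: near_all => s' s'f; case: (H s' s'f) => [->|lt].
    by near=> y; left.
  have cg : {for x, continuous (trop_lin s' - trop_lin s)}.
    by apply: differentiable_continuous; apply: differentiableB; exact: tlin_diff.
  have := @cvgr_gt _ _ (nbhs x) _ _ _ cg 0.
  rewrite /= subr_gt0 => /(_ (nbhs_filter x) lt) N.
  near=> y; right; rewrite -subr_gt0; near: y; exact: N.
move=> Hn; apply: filterS Hn => y Hy.

have fnil : f != [::] by move: sf; case: (f).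
have [s0 s0f e0] := teval_att y fnil; rewrite e0.
case: (Hy s0 s0f) => [-> //|lt].
by move: (teval_le y sf); rewrite e0 leNgt lt.
Unshelve. all: by end_near. Qed.

End T.

Definition pp (z : int) : nat := if (0 <= z)%R then `|z|%N else 0%N.
Definition nn (z : int) : nat := if (0 <= z)%R then 0%N else `|z|%N.

Lemma ppnn (R : realType) (z : int) : (pp z)%:R - (nn z)%:R = z%:~R :> R.
Proof.
rewrite /pp /nn; case: (lerP 0 z) => hz; rewrite ?subr0 ?sub0r natr_absz.
  by rewrite ger0_norm.
by rewrite ltr0_norm // mulrNz opprK.
Qed.

Lemma ppnn_eq (z : int) : pp z = nn z -> z = 0.
Proof.
rewrite /pp /nn; case: (lerP 0 z) => hz.
  by move/eqP; rewrite absz_eq0 => /eqP.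
by move/esym/eqP; rewrite absz_eq0 => /eqP.
Qed.

Section Main.
Variables (R : realType) (n : nat).

Definition Pf (a : 'I_n -> int) : {ffun 'I_n -> nat} := [ffun j => pp (a j)].
Definition Nf (a : 'I_n -> int) : {ffun 'I_n -> nat} := [ffun j => nn (a j)].

Lemma PNlin (a : 'I_n -> int) (x : 'rV[R]_n) :
  \sum_(j < n) ((Pf a) j)%:R * x ord0 j - \sum_(j < n) ((Nf a) j)%:R * x ord0 j
  = int_lin a x.
Proof.
rewrite /int_lin -sumrB; apply: eq_bigr => j _.
by rewrite !ffunE -mulrBl ppnn.
Qed.

Lemma PN_neq (a : 'I_n -> int) j : a j != 0 -> Pf a != Nf a.
Proof.
move=> aj; apply/negP => /eqP /ffunP /(_ j); rewrite !ffunE => /ppnn_eq.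
by move/eqP: aj.
Qed.

Definition hyp (a : 'I_n -> int) (c : R) : trop_poly R n :=
  [:: (Pf a, 0); (Nf a, c)].

Lemma hyp_V (a : 'I_n -> int) (c : R) (x : 'rV[R]_n) j : a j != 0 ->
  trop_hypersurface (hyp a c) x <-> int_lin a x = c.
Proof.
move=> aj.
have e : trop_lin (Pf a, 0) x - trop_lin (Nf a, c) x = int_lin a x - c.
  by rewrite /trop_lin /= addr0 opprD addrA PNlin.
have m1 : (Pf a, 0) \in hyp a c by rewrite mem_head.
have m2 : (Nf a, c) \in hyp a c by rewrite !inE eqxx orbT.
split.
  rewrite /trop_hypersurface => nd; apply/eqP; rewrite -subr_eq0 -e subr_eq0.
  apply/negP => /negP ne; apply: nd.
  case: (ltgtP (trop_lin (Pf a, 0) x) (trop_lin (Nf a, c) x)) ne => // lt _.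
    apply: (diff_uniq m1) => s'; rewrite !inE => /orP [/eqP ->|/eqP ->]; by [left|right].
  apply: (diff_uniq m2) => s'; rewrite !inE => /orP [/eqP ->|/eqP ->]; by [right|left].
move=> ex.
have eq12 : trop_lin (Pf a, 0) x = trop_lin (Nf a, c) x.
  by apply/eqP; rewrite -subr_eq0 e ex subrr.
have [s0] := teval_att x (isT : hyp a c != [::]).
rewrite !inE => /orP [/eqP ->|/eqP ->] e0.
  by apply: (not_diff m1 m2 (PN_neq aj)); rewrite e0 ?eq12.
by apply: (not_diff m1 m2 (PN_neq aj)); rewrite e0 ?eq12.
Qed.

Definition addf (u v : {ffun 'I_n -> nat}) : {ffun 'I_n -> nat} := [ffun j => (u j + v j)%N].

Definition half (a : 'I_n -> int) (c : R) (b : 'I_n -> int) (d : R) : trop_poly R n :=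
  [:: (addf (Pf a) (Nf b), d); (addf (Nf a) (Nf b), c + d); (addf (Pf a) (Pf b), 0)].

Lemma lin_addf (u v : {ffun 'I_n -> nat}) (x : 'rV[R]_n) :
  \sum_(j < n) ((addf u v) j)%:R * x ord0 j =
  \sum_(j < n) (u j)%:R * x ord0 j + \sum_(j < n) (v j)%:R * x ord0 j.
Proof. by rewrite -big_split; apply: eq_bigr => j _; rewrite ffunE natrD mulrDl. Qed.

Lemma half_V (a : 'I_n -> int) (c : R) (b : 'I_n -> int) (d : R) (x : 'rV[R]_n) j :
  a j != 0 -> int_lin a x = c ->
  trop_hypersurface (half a c b d) x <-> d <= int_lin b x.
Proof.
move=> aj ex.
pose t1 := (addf (Pf a) (Nf b), d); pose t2 := (addf (Nf a) (Nf b), c + d).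
pose t3 : trop_term R n := (addf (Pf a) (Pf b), 0).
have m1 : t1 \in half a c b d by rewrite mem_head.
have m2 : t2 \in half a c b d by rewrite !inE eqxx orbT.
have m3 : t3 \in half a c b d by rewrite !inE eqxx !orbT.
have e12 : trop_lin t1 x = trop_lin t2 x.
  apply/eqP; rewrite -subr_eq0 /trop_lin /= !lin_addf.
  rewrite -ex -(PNlin a x); apply/eqP.
  set A := \sum_(j < n) _ * _; set B := \sum_(j < n) _ * _; set C := \sum_(j < n) _ * _.
  lra.
have e13 : trop_lin t1 x - trop_lin t3 x = d - int_lin b x.
  rewrite /trop_lin /= !lin_addf -(PNlin b x).
  set A := \sum_(j < n) _ * _; set B := \sum_(j < n) _ * _; set C := \sum_(j < n) _ * _.
  lra.
have n12 : t1.1 != t2.1.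
  apply/negP => /eqP /ffunP /(_ j); rewrite !ffunE => /eqP; rewrite eqn_add2r => /eqP.
  by move/ppnn_eq; move/eqP: aj.
split.
  rewrite /trop_hypersurface => nd.
  rewrite leNgt; apply/negP => lt; apply: nd.
  have l31 : trop_lin t3 x < trop_lin t1 x by rewrite -subr_gt0 e13 subr_gt0.
  apply: (diff_uniq m3) => s'; rewrite !inE => /orP [/eqP ->|/orP [/eqP ->|/eqP ->]].
  - by right.
  - by right; rewrite -e12.
  - by left.
move=> hd.
have l13 : trop_lin t1 x <= trop_lin t3 x by rewrite -subr_le0 e13 subr_le0.
have [s0] := teval_att x (isT : half a c b d != [::]).
have le1 := teval_le x m1.
rewrite !inE => /orP [/eqP ->|/orP [/eqP ->|/eqP ->]] e0.
- by apply: (not_diff m1 m2 n12); rewrite e0 ?e12.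
- by apply: (not_diff m1 m2 n12); rewrite e0 ?e12.
- have e0' : trop_eval (half a c b d) x = trop_lin t1 x.
    by apply/eqP; rewrite eq_le le1 e0 l13.
  by apply: (not_diff m1 m2 n12); rewrite e0' ?e12.
Qed.

End Main.


Unset Implicit Arguments.

Theorem lemma1p1 (R : realType) (n k : nat)
    (M : 'M[int]_(k, n)) (c : 'I_k -> R) (b : 'I_n -> int) (d : R) :
  let A := [set x : 'rV[R]_n | forall i : 'I_k, int_lin (M i) x = c i] in
  A !=set0 ->
  A <> setT ->
  (exists x, A x /\ d < int_lin b x) ->
  (exists x, A x /\ int_lin b x < d) ->
  trop_prevariety [set x | A x /\ d <= int_lin b x].
Proof.
move=> A [x0 Ax0] AT _ _.
have zrow i : (forall j, M i j = 0) -> forall x : 'rV[R]_n, int_lin (M i) x = 0.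
  by move=> hz x; rewrite /int_lin big1 // => j _; rewrite hz mul0r.
have zc i : (forall j, M i j = 0) -> c i = 0.
  by move=> hz; rewrite -(Ax0 i) zrow.
have [r [jr hr]] : exists r, exists j, M r j != 0.
  apply: contrapT => H; apply: AT; apply/seteqP; split => // y _ i.
  have hz : forall j, M i j = 0.
    by move=> j; apply/eqP; apply: contrapT => /negP hj; apply: H; exists i, j.
  by rewrite (zrow i hz) (zc i hz).
pose fs := [seq hyp (M i) (c i) | i <- [seq i <- enum 'I_k | [exists j, M i j != 0]]]
  ++ [:: half (M r) (c r) b d].
exists fs; split.
  by move=> f; rewrite mem_cat => /orP [/mapP [i _ ->]|]; rewrite ?inE => // /eqP ->.
have hin i j : M i j != 0 -> hyp (M i) (c i) \in fs.
  move=> hj; rewrite mem_cat; apply/orP; left; apply/mapP; exists i => //.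
  by rewrite mem_filter mem_enum andbT; apply/existsP; exists j.
have hh : half (M r) (c r) b d \in fs by rewrite mem_cat mem_head orbT.
apply/seteqP; split => x /=.
  move=> [Ax dx] f; rewrite mem_cat => /orP [/mapP [i]|].
    rewrite mem_filter => /andP [/existsP [j hj] _] ->.
    by apply/(hyp_V (c i) x hj).
  rewrite inE => /eqP ->; exact/(half_V b d hr (Ax r)).
move=> H.
have Ax : A x.
  move=> i; case: (boolP [exists j, M i j != 0]) => [/existsP [j hj]|/existsPn hz].
    by apply/(hyp_V (c i) x hj); apply: H; exact: hin hj.
  have hz' : forall j, M i j = 0 by move=> j; apply/eqP; move: (hz j); rewrite negbK.
  by rewrite (zrow i hz') (zc i hz').
split => //; apply/(half_V b d hr (Ax r)); exact: H.
Qed.
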